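(* Let $M_i=(E,r_i)$, $1\le i\le m$, be demi-matroids on the same finite ground set $E$ with $r_m(X)\le\cdots\le r_2(X)\le r_1(X)$ for all $X\subseteq E$ (a flag). If $\mathcal{E}_{M_1}\subseteq\mathcal{E}_{M_2}\subseteq\cdots\subseteq\mathcal{E}_{M_m}$, then $(E,\rho)$ with $\rho(X)=\sum_{i=1}^m(-1)^{i+1}r_i(X)$ is a demi-matroid.
   Context: A demi-matroid is a pair $(E,r)$ with $E$ a finite set and $r:2^E\to\mathbb{N}$ satisfying (R1) $r(\emptyset)=0$ and (R2) for every $X\subseteq E$ and $x\in E$, $r(X)\le r(X\cup\{x\})\le r(X)+1$. (Matroids are special demi-matroids.) For a demi-matroid $M=(E,r)$, $\mathcal{E}_M=\{(X,x): X\subseteq E,\ x\in X,\ r(X\setminus\{x\})=r(X)\}$. *)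

(* Defs.v *)
From mathcomp Require Import all_boot all_order all_algebra.
Set Implicit Arguments. Unset Strict Implicit. Unset Printing Implicit Defensive.
Import GRing.Theory Num.Theory.

Definition is_demi_matroid (E : finType) (r : {set E} -> nat) : Prop :=
  r set0 = 0%N /\
  (forall (X : {set E}) (x : E), (r X <= r (x |: X))%N /\ (r (x |: X) <= (r X).+1)%N).

Definition calE (E : finType) (r : {set E} -> nat) : {set {set E} * E} :=
  [set p : {set E} * E | (p.2 \in p.1) && (r (p.1 :\ p.2) == r p.1)].

Definition alt_sum (E : finType) (m : nat) (r : nat -> {set E} -> nat)
  (X : {set E}) : int :=
  (\sum_(1 <= i < m.+1) (-1) ^+ i.+1 * (r i X)%:Z)%R.

Definition is_demi_matroid_int (E : finType) (rho : {set E} -> int) : Prop :=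
  (forall X, 0 <= rho X)%R /\ is_demi_matroid (fun X => `|rho X|%N).

(* Main.v *)
Require Import Defs.
From mathcomp Require Import all_boot all_order all_algebra zify.
Import GRing.Theory Num.Theory.
Local Open Scope ring_scope.

Definition S (f : nat -> int) m := \sum_(1 <= i < m.+1) (-1) ^+ i.+1 * f i.

Lemma rdown i m : (1 <= i < m)%N -> (1 <= i < m.+1)%N.
Proof. by case/andP=> h1 h2; rewrite h1 ltnW. Qed.
Lemma rdown2 i m : (1 <= i <= m)%N -> (1 <= i <= m.+1)%N.
Proof. by case/andP=> h1 h2; rewrite h1 leqW. Qed.
Lemma S0 f : S f 0 = 0. Proof. by rewrite /S big_geq. Qed.
Lemma SS f m : S f m.+1 = S f m + (if odd m then -1 else 1) * f m.+1.
Proof.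
rewrite /S big_nat_recr //= -signr_odd /=. by case: (odd m).
Qed.

Lemma alt_nonneg (a : nat -> int) m : (forall i, (1<=i<m)%N -> a i.+1 <= a i) ->
  (forall i, (1<=i<=m)%N -> 0<=a i) -> 0 <= S a m /\ (odd m -> a m <= S a m).
Proof.
elim: m => [|m IH] Hd Hp; first by rewrite S0.
have [H1 H2] := IH (fun i h => Hd i (@rdown i m h)) (fun i h => Hp i (@rdown2 i m h)).
rewrite SS /=.
have hp : 0 <= a m.+1 by apply: (Hp); lia.
case: m IH Hd Hp H1 H2 hp => [|m] IH Hd Hp H1 H2 hp.
  by rewrite S0 /=; lia.
have hd : a m.+2 <= a m.+1 by apply: (Hd); lia.
move: H2; rewrite /=; case: (odd m) => /= H2; [lia | have := H2 isT; lia].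
Qed.

Lemma alt01 (d : nat -> int) m : (forall i, (1<=i<m)%N -> d i = 0 -> d i.+1 = 0) ->
  (forall i, (1<=i<=m)%N -> d i = 0 \/ d i = 1) ->
  (S d m = 0 \/ S d m = 1) /\ ((1 <= m)%N -> d m = 1 -> S d m = (odd m)%:Z).
Proof.
elim: m => [|m IH] Hd Hp; first by rewrite S0; split=> //; left.
have [H1 H2] := IH (fun i h => Hd i (@rdown i m h)) (fun i h => Hp i (@rdown2 i m h)).
rewrite SS /=.
have [hp|hp] : d m.+1 = 0 \/ d m.+1 = 1 by apply: (Hp); lia.
  rewrite hp mulr0 addr0; split=> // _; lia.
rewrite hp; split; last first.
  case: m IH Hd Hp H1 H2 hp => [|m] IH Hd Hp H1 H2 hp.
    by rewrite S0.
  have hm : d m.+1 = 1.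
    have [h0|//] : d m.+1 = 0 \/ d m.+1 = 1 by apply: (Hp); lia.
    have : (1 <= m.+1 < m.+2)%N by lia. move=> /Hd /(_ h0); lia.
  move=> _ _; rewrite (H2 isT hm) /=; case: (odd m) => /=; lia.
case: m IH Hd Hp H1 H2 hp => [|m] IH Hd Hp H1 H2 hp.
  by rewrite S0; right.
have hm : d m.+1 = 1.
  have [h0|//] : d m.+1 = 0 \/ d m.+1 = 1 by apply: (Hp); lia.
  have : (1 <= m.+1 < m.+2)%N by lia. move=> /Hd /(_ h0); lia.
rewrite (H2 isT hm) /=; case: (odd m) => /=; lia.
Qed.

Lemma absfin (a b : int) : 0 <= a -> 0 <= b -> (b - a = 0 \/ b - a = 1) ->
  (`|a| <= `|b|)%N /\ (`|b| <= `|a|.+1)%N.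
Proof. move=> ha hb h; split; lia. Qed.

Theorem mainTheorem2 (E : finType) (m : nat) (r : nat -> {set E} -> nat) :
  (forall i, (1 <= i <= m)%N -> is_demi_matroid (r i)) ->
  (forall i (X : {set E}), (1 <= i < m)%N -> (r i.+1 X <= r i X)%N) ->
  (forall i, (1 <= i < m)%N -> calE (r i) \subset calE (r i.+1)) ->
  is_demi_matroid_int (alt_sum m r).
Proof.
move=> Hdm Hfl Hsub.
have Hnn : forall X, 0 <= alt_sum m r X.
  move=> X; change (alt_sum m r X) with (S (fun i => (r i X)%:Z) m).
  have [] // := @alt_nonneg (fun i => (r i X)%:Z) m.
  - by move=> i hi /=; rewrite lez_nat Hfl.
split=> //; split.
  rewrite /alt_sum big_nat_cond big1 // => i /andP[/andP[h1 h2] _].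
  by have [-> _] := Hdm i (ltac:(lia)); rewrite mulr0.
move=> X x; apply: absfin => //.
have -> : alt_sum m r (x |: X) - alt_sum m r X =
   S (fun i => (r i (x |: X))%:Z - (r i X)%:Z) m.
  by rewrite /alt_sum /S -sumrB; apply: eq_bigr => i _; rewrite mulrBr.
have [] // := @alt01 (fun i => (r i (x |: X))%:Z - (r i X)%:Z) m.
- move=> i hi /= h0.
  case xX: (x \in X).
    by rewrite (setUidPr _) ?sub1set // subrr.
  have e : r i (x |: X) = r i X by lia.
  have hin : ((x |: X), x) \in calE (r i).
    by rewrite inE /= setU11 /= setU1K ?xX // e.
  have := subsetP (Hsub i hi) _ hin; rewrite inE /= => /andP[_ /eqP].
  rewrite setU1K ?xX //; lia.
- move=> i hi /=; have [_ /(_ X x) [h1 h2]] := Hdm i hi; lia.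
Qed.
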